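(* Let $n\ge2$ and let $h$ be a smooth symmetric two-covariant tensor field on $\mathbb H^n$. Define the symmetric tensor field \[ \psi=\frac{1}{(x^1)^{n+1}}\bigl(h-h^i{}_i\, b\bigr). \] Then $h=(x^1)^{n+1}\bigl(\psi+\tfrac{1}{1-n}\psi^i{}_i\, b\bigr)$ and \[ P(h)=(x^1)^{n+1}\Bigl(\partial_i\partial_j\psi^{ij}+\partial_1\bigl(\tfrac{1}{x^1}\psi^{ii}\bigr)\Bigr), \] where $\psi^{ij}=b^{ik}b^{j\ell}\psi_{k\ell}$ and $\partial_i=\partial_{x^i}$.
   Context: $\mathbb H^n=\{x\in\mathbb R^n:x^1>0\}$ with hyperbolic metric $b=(x^1)^{-2}\sum_i dx^i\otimes dx^i$. Components are taken in the coordinates $x$; indices are raised and lowered with $b$; all repeated indices are summed over $1,\dots,n$ regardless of position (so $\psi^{ii}=\sum_i\psi^{ii}$ and $h^i{}_i=b^{ij}h_{ij}$). $P(h)=D^iD^jh_{ij}-D^iD_ih^j{}_j-\mathrm{Ric}^{ij}h_{ij}$, where $D$ and $\mathrm{Ric}$ are the Levi-Civita connection and Ricci tensor of $b$. *)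

(* Defs.v *)
From HB Require Import structures.
From mathcomp Require Import all_boot all_order all_algebra.
From mathcomp Require Import all_classical all_reals all_analysis.
Set Implicit Arguments. Unset Strict Implicit. Unset Printing Implicit Defensive.
Import Order.TTheory GRing.Theory Num.Theory.
Import numFieldNormedType.Exports.
Local Open Scope ring_scope.
Local Open Scope classical_set_scope.

Section Hyperbolic.
Variables (R : realType) (n : nat).

Notation pt := 'rV[R]_n.

(* Paper's coordinate x^1 is our index 0 (the ordinal with value 0). *)
Definition x1 (x : pt) : R := \sum_(i < n | nat_of_ord i == 0%N) x 0 i.

Definition Hn : set pt := [set x | 0 < x1 x].

Definition pd (i : 'I_n) (f : pt -> R) : pt -> R :=
  fun x => 'D_(delta_mx 0 i) f x.

Definition iter_pd (s : seq 'I_n) (f : pt -> R) : pt -> R :=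
  foldr (fun i g => pd i g) f s.

Definition smooth_on (U : set pt) (f : pt -> R) : Prop :=
  forall (s : seq 'I_n) (x : pt), U x -> differentiable (iter_pd s f) x.

Definition bmet (x : pt) : 'M[R]_n := ((x1 x) ^- 2)%:M.
Definition binv (x : pt) : 'M[R]_n := invmx (bmet x).

Definition trb (T : pt -> 'M[R]_n) (x : pt) : R :=
  \sum_(i < n) \sum_(j < n) binv x i j * T x i j.

Definition raise2 (T : pt -> 'M[R]_n) (x : pt) : 'M[R]_n :=
  \matrix_(i < n, j < n) \sum_(k < n) \sum_(l < n) binv x i k * binv x j l * T x k l.

Definition Gam (k i j : 'I_n) (x : pt) : R :=
  2^-1 * \sum_(l < n) binv x k l *
    (pd i (fun y => bmet y j l) x + pd j (fun y => bmet y i l) x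
     - pd l (fun y => bmet y i j) x).

Definition Ric (i j : 'I_n) (x : pt) : R :=
  \sum_(k < n) (pd k (Gam k i j) x - pd j (Gam k i k) x
     + \sum_(l < n) (Gam k k l x * Gam l i j x - Gam k j l x * Gam l i k x)).

Definition DT (T : pt -> 'M[R]_n) (k i j : 'I_n) (x : pt) : R :=
  pd k (fun y => T y i j) x
  - \sum_(m < n) (Gam m k i x * T x m j + Gam m k j x * T x i m).

Definition D2T (T : pt -> 'M[R]_n) (a c i j : 'I_n) (x : pt) : R :=
  pd a (DT T c i j) x
  - \sum_(m < n) (Gam m a c x * DT T m i j x + Gam m a i x * DT T c m j x
                  + Gam m a j x * DT T c i m x).

Definition Hess (f : pt -> R) (a c : 'I_n) (x : pt) : R :=
  pd a (pd c f) x - \sum_(m < n) Gam m a c x * pd m f x.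

(* P(h) = D^i D^j h_{ij} - D^i D_i h^j_j - Ric^{ij} h_{ij} *)
Definition Pop (h : pt -> 'M[R]_n) (x : pt) : R :=
  \sum_(i < n) \sum_(j < n) \sum_(a < n) \sum_(c < n)
     binv x i a * binv x j c * D2T h a c i j x
  - \sum_(a < n) \sum_(c < n) binv x a c * Hess (trb h) a c x
  - \sum_(i < n) \sum_(j < n) \sum_(a < n) \sum_(c < n)
     binv x i a * binv x j c * Ric a c x * h x i j.

Definition psi (h : pt -> 'M[R]_n) (x : pt) : 'M[R]_n :=
  (x1 x ^+ n.+1)^-1 *: (h x - trb h x *: bmet x).

End Hyperbolic.

(* Main.v *)
Require Import Defs.
From HB Require Import structures.
From mathcomp Require Import all_boot all_order all_algebra.
From mathcomp Require Import all_classical all_reals all_analysis.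
From mathcomp Require Import ring lra zify.
Set Implicit Arguments. Unset Strict Implicit. Unset Printing Implicit Defensive.
Import Order.TTheory GRing.Theory Num.Theory.
Import numFieldNormedType.Exports.
Local Open Scope ring_scope.

Section Infra.
Variables (R : realType) (n : nat).
Hypothesis hn : (2 <= n)%N.
Notation pt := 'rV[R]_n.

Lemma n_gt0 : (0 < n)%N. Proof. exact: leq_trans hn. Qed.
Definition o0 : 'I_n := Ordinal n_gt0.
Definition dl (i j : 'I_n) : R := (i == j)%:R.

Lemma x1E (y : pt) : x1 y = y 0 o0.
Proof. by rewrite /x1 (big_pred1 o0) // => i; rewrite /= -val_eqE. Qed.

Lemma pd_coord (k : 'I_n) (v x : pt) : 'D_v (fun y : pt => y 0 k) x = v 0 k.
Proof.
rewrite /derive; apply: cvg_lim => //.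
apply: cvg_trans (cvg_cst (v 0 k)).
apply: near_eq_cvg; apply: filterS (@nbhs_dnbhs_neq _ (0:R)) => h /= h0.
by rewrite !mxE addrK /GRing.scale /= mulrA mulVf ?mul1r.
exact: dnbhs_filter. Qed.


Notation e a := (delta_mx 0 a : pt).
Definition der (f : pt -> R) (x : pt) := forall a : 'I_n, derivable f x (e a).

Section pdlemmas.
Variables (x : pt) (a : 'I_n).
Implicit Types f g : pt -> R.
Lemma pdD f g : derivable f x (e a) -> derivable g x (e a) ->
  pd a (fun y => f y + g y) x = pd a f x + pd a g x.
Proof. by move=> df dg; rewrite /pd (deriveD df dg). Qed.
Lemma pdB f g : derivable f x (e a) -> derivable g x (e a) ->
  pd a (fun y => f y - g y) x = pd a f x - pd a g x.
Proof. by move=> df dg; rewrite /pd (deriveB df dg). Qed.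
Lemma pdN f : derivable f x (e a) -> pd a (fun y => - f y) x = - pd a f x.
Proof. by move=> df; rewrite /pd (deriveN df). Qed.
Lemma pdM f g : derivable f x (e a) -> derivable g x (e a) ->
  pd a (fun y => f y * g y) x = f x * pd a g x + g x * pd a f x.
Proof. by move=> df dg; rewrite /pd (deriveM df dg). Qed.
Lemma pdMl f (c : R) : derivable f x (e a) -> pd a (fun y => c * f y) x = c * pd a f x.
Proof. by move=> df; rewrite /pd -(deriveMl c df). Qed.
Lemma pdMr f (c : R) : derivable f x (e a) -> pd a (fun y => f y * c) x = pd a f x * c.
Proof. by move=> df; rewrite /pd (deriveMr c df) mulrC. Qed.
Lemma pd_cst (c : R) : pd a (fun _ => c) x = 0.
Proof. exact: (derive_cst c). Qed.
Lemma pd_sum m (F : 'I_m -> pt -> R) : (forall i, derivable (F i) x (e a)) ->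
  pd a (fun y => \sum_(i < m) F i y) x = \sum_(i < m) pd a (F i) x.
Proof.
move=> dF; rewrite /pd -(derive_sum dF) fct_sumE //.
Qed.
Lemma derD f g : derivable f x (e a) -> derivable g x (e a) ->
  derivable (fun y => f y + g y) x (e a).
Proof. exact: derivableD. Qed.
Lemma derB f g : derivable f x (e a) -> derivable g x (e a) ->
  derivable (fun y => f y - g y) x (e a).
Proof. exact: derivableB. Qed.
Lemma derN f : derivable f x (e a) -> derivable (fun y => - f y) x (e a).
Proof. exact: derivableN. Qed.
Lemma derM f g : derivable f x (e a) -> derivable g x (e a) ->
  derivable (fun y => f y * g y) x (e a).
Proof. exact: derivableM. Qed.
Lemma der_cst (c : R) : derivable (fun _ : pt => c) x (e a).
Proof. exact: derivable_cst. Qed.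
Lemma derMl f (c : R) : derivable f x (e a) -> derivable (fun y => c * f y) x (e a).
Proof. by move=> df; apply: derM => //; apply: der_cst. Qed.
Lemma derMr f (c : R) : derivable f x (e a) -> derivable (fun y => f y * c) x (e a).
Proof. by move=> df; apply: derM => //; apply: der_cst. Qed.
Lemma der_sum m (F : 'I_m -> pt -> R) : (forall i, derivable (F i) x (e a)) ->
  derivable (fun y => \sum_(i < m) F i y) x (e a).
Proof.
move=> dF; have := derivable_sum dF; by rewrite fct_sumE.
Qed.
Lemma der_x1 : derivable (@x1 R n) x (e a).
Proof.
have -> : @x1 R n = (fun y : pt => y 0 o0) by apply/funext => y; rewrite x1E.
exact/diff_derivable/differentiable_coord.
Qed.
Lemma pd_x1 : pd a (@x1 R n) x = dl a o0.
Proof.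
have -> : @x1 R n = (fun y : pt => y 0 o0) by apply/funext => y; rewrite x1E.
by rewrite /pd pd_coord mxE /dl eqxx /= eq_sym.
Qed.
End pdlemmas.


Definition pw (k : int) (y : pt) : R := x1 y ^ k.

Lemma pwE k y : pw k y = x1 y ^ k. Proof. by []. Qed.

Lemma der_pw k x a : x1 x != 0 -> derivable (pw k) x (e a).
Proof.
move=> x0; case: k => m.
  have -> : pw (Posz m) = (@x1 R n) ^+ m by rewrite exprfctE; apply/funext.
  by apply: derivableX; apply: der_x1.
have -> : pw (Negz m) = fun y => (((@x1 R n) ^+ m.+1) y)^-1.
  by rewrite exprfctE; apply/funext.
apply: derivableV; first by rewrite exprfctE expf_neq0.
by apply: derivableX; apply: der_x1.
Qed.

Lemma PoszS1 (m : nat) : (Posz m.+1 - 1 = Posz m)%R.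
Proof. lia. Qed.
Lemma NegzS1 (m : nat) : (Negz m - 1 = Negz m.+1)%R.
Proof. rewrite !NegzE; lia. Qed.

Lemma pd_pw k x a : x1 x != 0 -> pd a (pw k) x = k%:~R * pw (k - 1) x * dl a o0.
Proof.
move=> x0; case: k => m.
  have -> : pw (Posz m) = (@x1 R n) ^+ m by rewrite exprfctE; apply/funext.
  rewrite /pd deriveX; last exact: der_x1.
  rewrite -/(pd a _ x) pd_x1 /=; case: m => [|m]; first by rewrite /GRing.scale /= !mul0r.
  rewrite /pw PoszS1 /= /GRing.scale /=.
  done.
have -> : pw (Negz m) = fun y => (((@x1 R n) ^+ m.+1) y)^-1.
  by rewrite exprfctE; apply/funext.
rewrite /pd deriveV; first last.
- by apply: derivableX; apply: der_x1.
- by rewrite exprfctE expf_neq0.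
rewrite deriveX; last exact: der_x1.
rewrite -/(pd a _ x) pd_x1 exprfctE /=.
rewrite NegzS1.
rewrite /pw !NegzE -exprnN mulrNz /= /GRing.scale /=.
have X0 : x1 x ^+ m != 0 by rewrite expf_neq0.
rewrite !exprS; field.
by rewrite X0 x0.
Qed.

Lemma Hn_near (x : pt) : Hn x -> \forall y \near x, Hn y.
Proof.
rewrite /Hn /= x1E => hx.
have := @coord_continuous R 1 n 0 o0 x _ (lt_nbhsr hx).
move=> H; near=> y; rewrite /Hn /= x1E; near: y; exact: H.
Unshelve. all: by end_near. Qed.

Lemma pd_loc (f g : pt -> R) (x : pt) a : (forall y, Hn y -> f y = g y) -> Hn x -> pd a f x = pd a g x.
Proof.
move=> fg hx; rewrite /pd; apply: near_eq_derive.
by apply: filterS (Hn_near hx) => y; apply: fg.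
Qed.

Lemma der_loc (f g : pt -> R) (x : pt) a : (forall y, Hn y -> f y = g y) -> Hn x ->
  derivable f x (e a) -> derivable g x (e a).
Proof.
move=> fg hx; apply: near_eq_derivable.
by apply: filterS (Hn_near hx) => y; apply: fg.
Qed.

Lemma dl_sym i j : dl i j = dl j i. Proof. by rewrite /dl eq_sym. Qed.
Lemma dl_id i : dl i i = 1. Proof. by rewrite /dl eqxx. Qed.

Lemma sum_dl_l (j : 'I_n) (F : 'I_n -> R) : \sum_(m < n) dl j m * F m = F j.
Proof.
rewrite (bigD1 j) //= dl_id mul1r big1 ?addr0 // => m mj.
by rewrite /dl eq_sym (negPf mj) mul0r.
Qed.
Lemma sum_dl_r (j : 'I_n) (F : 'I_n -> R) : \sum_(m < n) dl m j * F m = F j.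
Proof. by rewrite -[RHS](sum_dl_l j); apply: eq_bigr => m _; rewrite dl_sym. Qed.

Lemma pwD k l x : x1 x != 0 -> pw k x * pw l x = pw (k + l) x.
Proof. by move=> x0; rewrite /pw expfzDr. Qed.

End Infra.

Section Part2.
Variables (R : realType) (n : nat).
Hypothesis hn : (2 <= n)%N.
Local Notation pt := 'rV[R]_n.
Local Notation o := (o0 hn).
Local Notation d := (@dl R n).
Local Notation e a := (delta_mx 0 a : pt).

Lemma der_xp k (x : pt) a : derivable (fun y : pt => x1 y ^+ k) x (e a).
Proof.
rewrite -exprfctE; by apply: derivableX; apply: der_x1.
Qed.

Lemma pd_xp k (x : pt) a : pd a (fun y : pt => x1 y ^+ k) x = k%:R * x1 x ^+ k.-1 * d a o.
Proof.
rewrite -exprfctE /pd deriveX; last exact: der_x1.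
by rewrite -/(pd a _ x) (pd_x1 hn) /GRing.scale /=.
Qed.

Lemma der_xn k (x : pt) a : x1 x != 0 -> derivable (fun y : pt => (x1 y ^+ k.+1)^-1) x (e a).
Proof. move=> x0; exact: (@der_pw R n hn (Negz k) x a x0). Qed.

Lemma pd_xn k (x : pt) a : x1 x != 0 ->
  pd a (fun y : pt => (x1 y ^+ k.+1)^-1) x = - k.+1%:R * (x1 x ^+ k.+2)^-1 * d a o.
Proof.
move=> x0; have := pd_pw hn (Negz k) a x0.
rewrite /pw (NegzS1 hn) NegzE mulrNz => ->; by [].
Qed.

Lemma inv_fun_eq : (fun y : pt => (x1 y)^-1) = (fun y : pt => (x1 y ^+ 1)^-1).
Proof. by apply/funext => y; rewrite expr1. Qed.

Lemma der_invx (x : pt) a : x1 x != 0 -> derivable (fun y : pt => (x1 y)^-1) x (e a).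
Proof. by move=> x0; rewrite inv_fun_eq; apply: der_xn. Qed.

Lemma pd_inv (x : pt) a : x1 x != 0 ->
  pd a (fun y : pt => (x1 y)^-1) x = - (x1 x ^+ 2)^-1 * d a o.
Proof. by move=> x0; rewrite inv_fun_eq pd_xn //; ring. Qed.

Lemma binvE (y : pt) : binv y = (x1 y ^+ 2)%:M.
Proof. by rewrite /binv /bmet invmx_scalar invrK. Qed.

Lemma binv_e (y : pt) i j : binv y i j = x1 y ^+ 2 * d i j.
Proof. by rewrite binvE mxE /dl mulr_natr. Qed.

Lemma bmet_e (y : pt) i j : bmet y i j = (x1 y ^+ 2)^-1 * d i j.
Proof. by rewrite /bmet mxE /dl mulr_natr. Qed.

Ltac dsplit_2 := rewrite /dl; repeat (rewrite ?eqxx; match goal with |- context [(?a == ?b)] => case: (a =P b) => [?|?]; try subst end);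
  try (by exfalso; match goal with H : ?x <> ?x |- _ => exact: H erefl end); rewrite ?mulr1n ?mulr0n.

Lemma dsym i j : d i j = d j i. Proof. exact: dl_sym. Qed.
Lemma did i : d i i = 1. Proof. exact: dl_id. Qed.
Lemma sdl (j : 'I_n) (F : 'I_n -> R) : \sum_(m < n) d j m * F m = F j. Proof. exact: sum_dl_l. Qed.
Lemma sdr (j : 'I_n) (F : 'I_n -> R) : \sum_(m < n) d m j * F m = F j. Proof. exact: sum_dl_r. Qed.

Definition Cn (k i j : 'I_n) : R := d k o * d i j - d i o * d j k - d j o * d i k.

Lemma GamE k i j : Gam k i j = fun y : pt => (x1 y)^-1 * Cn k i j.
Proof.
apply/funext => y; rewrite /Gam.
have [y0|y0] := eqVneq (x1 y) 0.
  rewrite y0 invr0 mul0r big1 ?mulr0 // => l _.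
  by rewrite binv_e y0 expr0n /= !mul0r.
have pdb : forall a b c, pd a (fun y => bmet y b c) y = - 2%:R * (x1 y ^+ 3)^-1 * d a o * d b c.
  move=> a b c; rewrite (_ : (fun y => bmet y b c) = fun y => (x1 y ^+ 2)^-1 * d b c).
    rewrite pdMr; [by rewrite pd_xn | exact: der_xn].
  by apply/funext => z; rewrite bmet_e.
under eq_bigr do rewrite binv_e !pdb.
rewrite (eq_bigr (fun l => d k l * (x1 y ^+ 2 * (- 2%:R * (x1 y ^+ 3)^-1 * d i o * d j l +
   - 2%:R * (x1 y ^+ 3)^-1 * d j o * d i l - - 2%:R * (x1 y ^+ 3)^-1 * d l o * d i j)))); last first.
  by move=> l _; ring.
rewrite sdl /Cn (dsym j k) (dsym i k); field.
exact: y0.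
Qed.


Lemma GamSum i j (y : pt) (X : 'I_n -> R) :
  \sum_(m < n) Gam m i j y * X m = (x1 y)^-1 * (d i j * X o - d i o * X j - d j o * X i).
Proof.
rewrite (eq_bigr (fun m => (x1 y)^-1 * d i j * (d m o * X m) - (x1 y)^-1 * d i o * (d j m * X m)
   - (x1 y)^-1 * d j o * (d i m * X m))); last by move=> m _; rewrite GamE /Cn; ring.
rewrite !sumrB -!mulr_sumr sdr !sdl; ring.
Qed.

Lemma GamSum' i j (y : pt) (X : 'I_n -> R) :
  \sum_(m < n) X m * Gam m i j y = (x1 y)^-1 * (d i j * X o - d i o * X j - d j o * X i).
Proof. rewrite -GamSum; apply: eq_bigr => m _; exact: mulrC. Qed.

Lemma Cn_kkl k l : Cn k k l = - d l o.
Proof. rewrite /Cn did (dsym l k); ring. Qed.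
Lemma Cn_kck k c : Cn k c k = - d c o.
Proof. rewrite /Cn did (dsym c k); ring. Qed.

Lemma RicE (x : pt) a c : x1 x != 0 -> Ric a c x = (1 - n%:R) * (x1 x ^+ 2)^-1 * d a c.
Proof.
move=> x0; rewrite /Ric.
set w := (x1 x ^+ 2)^-1.
have wE : w = (x1 x)^-1 * (x1 x)^-1 by rewrite /w expr2 invfM.
have pdG : forall k i j b, pd b (Gam k i j) x = - w * d b o * Cn k i j.
  move=> k i j b; rewrite GamE pdMr ?pd_inv //; exact: der_invx.
rewrite (eq_bigr (fun k => w * (d k o * (Cn k c a - Cn k a c) - d a k * Cn k c o
    + (- (d a o * d c o) - d c o * d a o - Cn o a c)))); last first.
  move=> k _; rewrite !pdG.
  rewrite (eq_bigr (fun l => Gam k k l x * Gam l a c x - Gam k c l x * Gam l a k x)) //.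
  rewrite sumrB GamSum' GamSum'.
  rewrite !GamE wE /Cn; dsplit_2; ring.
rewrite -mulr_sumr big_split /= sumrB sdr sdl sumr_const card_ord.
rewrite /Cn -mulr_natr; dsplit_2; ring.
Qed.

End Part2.

Section Part3.
Variables (R : realType) (n : nat).
Hypothesis hn : (2 <= n)%N.
Local Notation pt := 'rV[R]_n.
Local Notation o := (o0 hn).
Local Notation d := (@dl R n).
Local Notation e a := (delta_mx 0 a : pt).
Variable h : pt -> 'M[R]_n.
Hypothesis hsm : forall i j : 'I_n, smooth_on (@Hn R n) (fun x => h x i j).

Ltac dsplit_3 := rewrite /dl; repeat (rewrite ?eqxx; match goal with |- context [(?a == ?b)] => case: (a =P b) => [?|?]; try subst end);
  try (by exfalso; match goal with H : ?x <> ?x |- _ => exact: H erefl end); rewrite ?mulr1n ?mulr0n.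

Lemma der_h (y : pt) p q a : Hn y -> derivable (fun y => h y p q) y (e a).
Proof. move=> hy; exact/diff_derivable/(hsm p q [::] hy). Qed.
Lemma der_g (y : pt) c p q a : Hn y -> derivable (fun y => pd c (fun y => h y p q) y) y (e a).
Proof. move=> hy; exact/diff_derivable/(hsm p q [:: c] hy). Qed.

Ltac dtac1_3 := match goal with
  | |- derivable (fun _ => ?c) _ _ => exact: der_cst
  | |- derivable (fun y => @fun_of_matrix _ _ _ (h y) _ _) _ _ => by apply: der_h
  | |- derivable (fun y => @pd _ _ _ (fun y => @fun_of_matrix _ _ _ (h y) _ _) y) _ _ => by apply: der_g
  | |- derivable (fun y => (@x1 _ _ y)^-1) _ _ => by apply: (@der_invx R n hn)
  | |- derivable (fun y => @?A y + @?B y) _ _ => apply: derD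
  | |- derivable (fun y => - @?A y) _ _ => apply: derN
  | |- derivable (fun y => @?A y * @?B y) _ _ => apply: derM
  | |- derivable (fun y => \sum_(i < _) @?A y i) _ _ => apply: der_sum => ?
  end.
Ltac dtac_3 := repeat dtac1_3.

Ltac pd1_3 := match goal with
  | |- context [@pd _ _ ?a (fun _ => ?c) ?x] => rewrite (@pd_cst _ _ x a c)
  | |- context [@pd _ _ ?a (fun y => (@x1 _ _ y)^-1) ?x] => rewrite (@pd_inv _ _ hn x a); last by []
  | |- context [@pd _ _ ?a (fun y => @?A y + @?B y) ?x] => rewrite (@pdD _ _ x a A B); [| dtac_3 | dtac_3]
  | |- context [@pd _ _ ?a (fun y => - @?A y) ?x] => rewrite (@pdN _ _ x a A); [| dtac_3]
  | |- context [@pd _ _ ?a (fun y => @?A y * @?B y) ?x] => rewrite (@pdM _ _ x a A B); [| dtac_3 | dtac_3]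
  end.
Ltac pdtac_3 := repeat (pd1_3; cbv beta).

Definition Kf (c p q : 'I_n) (y : pt) : R :=
  2%:R * d c o * h y p q + d p o * h y c q - d c p * h y o q + d q o * h y p c - d c q * h y p o.

Lemma DTE c p q : DT h c p q = fun y => pd c (fun y => h y p q) y + (x1 y)^-1 * Kf c p q y.
Proof.
apply/funext => y; rewrite /DT big_split /= (GamSum hn c p y (fun m => h y m q)).
rewrite (GamSum hn c q y (fun m => h y p m)) /Kf; ring.
Qed.



Lemma DTEx c p q y : DT h c p q y = pd c (fun y => h y p q) y + (x1 y)^-1 * Kf c p q y.
Proof. by rewrite DTE. Qed.

Lemma pdK a c p q (y : pt) : Hn y -> pd a (Kf c p q) y =
  2%:R * d c o * pd a (fun y => h y p q) y + d p o * pd a (fun y => h y c q) y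
  - d c p * pd a (fun y => h y o q) y + d q o * pd a (fun y => h y p c) y
  - d c q * pd a (fun y => h y p o) y.
Proof.
move=> hy; rewrite /Kf.
pdtac_3. ring.
Qed.



Lemma sum2_dec (F G H P : 'I_n -> 'I_n -> R) :
  \sum_(i < n) \sum_(j < n) (d i o * F i j + d j o * G i j + d i j * H i j + P i j) =
  \sum_(j < n) F o j + \sum_(i < n) G i o + \sum_(i < n) H i i + \sum_(i < n) \sum_(j < n) P i j.
Proof.
have E1 : \sum_(i < n) \sum_(j < n) d i o * F i j = \sum_(j < n) F o j.
  rewrite (eq_bigr (fun i => d i o * \sum_(j < n) F i j)) ?sdr // => i _; by rewrite mulr_sumr.
have E2 : \sum_(i < n) \sum_(j < n) d j o * G i j = \sum_(i < n) G i o.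
  by apply: eq_bigr => i _; rewrite sdr.
have E3 : \sum_(i < n) \sum_(j < n) d i j * H i j = \sum_(i < n) H i i.
  by apply: eq_bigr => i _; rewrite sdl.
rewrite -E1 -E2 -E3 -!big_split; apply: eq_bigr => i _; rewrite -!big_split //.
Qed.

Lemma sum2_P (X : 'I_n -> 'I_n -> R) (Y Z : 'I_n -> R) :
  \sum_(i < n) \sum_(j < n) (X i j + Y i + Z j) =
  \sum_(i < n) \sum_(j < n) X i j + (\sum_(i < n) Y i) *+ n + (\sum_(j < n) Z j) *+ n.
Proof.
rewrite (eq_bigr (fun i => \sum_(j < n) X i j + Y i *+ n + \sum_(j < n) Z j)); last first.
  by move=> i _; rewrite !big_split /= sumr_const card_ord.
by rewrite !big_split /= sumr_const card_ord sumrMnl.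
Qed.

Lemma sA (a : R) (G F : 'I_n -> R) : \sum_(i < n) (a * G i) * F i = a * \sum_(i < n) (G i * F i).
Proof. by rewrite mulr_sumr; apply: eq_bigr => i _; rewrite mulrA. Qed.
Lemma sdid (F : 'I_n -> R) : \sum_(i < n) d i i * F i = \sum_(i < n) F i.
Proof. by apply: eq_bigr => i _; rewrite did mul1r. Qed.

Ltac expand_3 := rewrite ?(mulrDr, mulrDl, mulrN, mulNr, opprD, opprK).
Ltac sumnorm_3 := rewrite ?(big_split, sumrN) /=; rewrite ?sA ?sdid -?mulr_sumr ?sdl ?sdr ?did ?sumr_const ?card_ord /=.

Lemma T1val (x : pt) : Hn x ->
  \sum_(i < n) \sum_(j < n) D2T h i j i j x =
  \sum_(i < n) \sum_(j < n) pd i (pd j (fun y => h y i j)) x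
  + (3%:R - n%:R) * (x1 x ^+ 2)^-1 * (\sum_(k < n) h x k k + (2%:R - n%:R) * h x o o)
  + (x1 x)^-1 * ((3%:R - n%:R) * (\sum_(k < n) pd k (fun y => h y k o) x
        + \sum_(k < n) pd k (fun y => h y o k) x) + \sum_(k < n) pd o (fun y => h y k k) x).
Proof.
move=> hx; have x0 : x1 x != 0 by rewrite gt_eqF.
set z := (x1 x)^-1.
set w := (x1 x ^+ 2)^-1.
have wE : w = z * z by rewrite /w /z expr2 invfM.
pose g a p q := pd a (fun y => h y p q) x.
pose Kx c p q := Kf c p q x.
pose Ex c p q := g c p q + z * Kx c p q.
transitivity (\sum_(i < n) \sum_(j < n) (d i o * (- w * Kx j i j + 4%:R * z * Ex j i j + z * g i j j)
   + d j o * (z * Ex i i j + z * Ex j i i + 3%:R * z * g i i j)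
   + d i j * (- z * Ex o i j - z * Ex j i o - z * g i o j)
   + (pd i (pd j (fun y => h y i j)) x - z * g i i o - z * Ex j o j))).
  apply: eq_bigr => i _; apply: eq_bigr => j _.
  rewrite /D2T DTE /= !big_split /=.
  rewrite (GamSum hn i j x (fun m => _)) (GamSum hn i i x (fun m => _)) (GamSum hn i j x (fun m => _)).
  rewrite !DTEx.
  rewrite /Ex /Kx /g /Kf -/z.
  pdtac_3.
  rewrite -/z -/w wE.
  by dsplit_3; ring.
rewrite sum2_dec sum2_P /Ex /Kx /g /Kf.
do 3 (expand_3; sumnorm_3).
rewrite wE; ring.
Qed.

End Part3.

Section Part4.
Variables (R : realType) (n : nat).
Hypothesis hn : (2 <= n)%N.
Local Notation pt := 'rV[R]_n.
Local Notation o := (o0 hn).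
Local Notation d := (@dl R n).
Local Notation e a := (delta_mx 0 a : pt).
Variable h : pt -> 'M[R]_n.
Hypothesis hsm : forall i j : 'I_n, smooth_on (@Hn R n) (fun x => h x i j).

Ltac dsplit_4 := rewrite /dl; repeat (rewrite ?eqxx; match goal with |- context [(?a == ?b)] => case: (a =P b) => [?|?]; try subst end);
  try (by exfalso; match goal with H : ?x <> ?x |- _ => exact: H erefl end); rewrite ?mulr1n ?mulr0n.

Lemma der_h4_4 (y : pt) p q a : Hn y -> derivable (fun y => h y p q) y (e a).
Proof. exact: der_h. Qed.
Lemma der_g4_4 (y : pt) c p q a : Hn y -> derivable (fun y => pd c (fun y => h y p q) y) y (e a).
Proof. exact: der_g. Qed.

Ltac dtac1_4 := match goal with
  | |- derivable (fun _ => ?c) _ _ => exact: der_cst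
  | |- derivable (fun y => @fun_of_matrix _ _ _ (h y) _ _) _ _ => by apply: der_h4_4
  | |- derivable (fun y => @pd _ _ _ (fun y => @fun_of_matrix _ _ _ (h y) _ _) y) _ _ => by apply: der_g4_4
  | |- derivable (fun y => (@x1 _ _ y)^-1) _ _ => by apply: (@der_invx R n hn)
  | |- derivable (fun y => (@x1 _ _ y) ^+ _) _ _ => by apply: (@der_xp R n hn)
  | |- derivable (fun y => ((@x1 _ _ y) ^+ _)^-1) _ _ => by apply: (@der_xn R n hn)
  | |- derivable (fun y => @?A y + @?B y) _ _ => apply: derD
  | |- derivable (fun y => - @?A y) _ _ => apply: derN
  | |- derivable (fun y => @?A y * @?B y) _ _ => apply: derM
  | |- derivable (fun y => \sum_(i < _) @?A y i) _ _ => apply: der_sum => ?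
  end.
Ltac dtac_4 := repeat dtac1_4.

Ltac pd1_4 := match goal with
  | |- context [@pd _ _ ?a (fun _ => ?c) ?x] => rewrite (@pd_cst _ _ x a c)
  | |- context [@pd _ _ ?a (fun y => (@x1 _ _ y)^-1) ?x] => rewrite (@pd_inv _ _ hn x a); last by []
  | |- context [@pd _ _ ?a (fun y => (@x1 _ _ y) ^+ ?k) ?x] => rewrite (@pd_xp _ _ hn k x a)
  | |- context [@pd _ _ ?a (fun y => ((@x1 _ _ y) ^+ ?k.+1)^-1) ?x] => rewrite (@pd_xn _ _ hn k x a); last by []
  | |- context [@pd _ _ ?a (fun y => \sum_(k < ?m) @?A y k) ?x] =>
       rewrite (@pd_sum _ _ x a m (fun k y => A y k)); [| move=> ?; dtac_4]
  | |- context [@pd _ _ ?a (fun y => @?A y + @?B y) ?x] => rewrite (@pdD _ _ x a A B); [| dtac_4 | dtac_4]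
  | |- context [@pd _ _ ?a (fun y => - @?A y) ?x] => rewrite (@pdN _ _ x a A); [| dtac_4]
  | |- context [@pd _ _ ?a (fun y => @?A y * @?B y) ?x] => rewrite (@pdM _ _ x a A B); [| dtac_4 | dtac_4]
  end.
Ltac pdtac_4 := repeat (pd1_4; cbv beta).

Ltac expand_4 := rewrite ?(mulrDr, mulrDl, mulrN, mulNr, opprD, opprK).
Ltac sumnorm_4 := rewrite ?(big_split, sumrN) /=; rewrite ?sA ?sdid -?mulr_sumr ?sdl ?sdr ?did ?sumr_const ?card_ord /=.

Lemma trbE : trb h = fun y => x1 y ^+ 2 * \sum_(k < n) h y k k.
Proof.
apply/funext => y; rewrite /trb mulr_sumr; apply: eq_bigr => i _.
rewrite (eq_bigr (fun j => d i j * (x1 y ^+ 2 * h y i j))) ?sdl // => j _.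
by rewrite binv_e; ring.
Qed.

Lemma pdtrb m (y : pt) : Hn y -> pd m (trb h) y =
  x1 y ^+ 2 * \sum_(k < n) pd m (fun y => h y k k) y + (\sum_(k < n) h y k k) * (2%:R * x1 y ^+ 1 * d m o).
Proof. move=> hy; rewrite trbE; pdtac_4; rewrite /=; ring. Qed.


Lemma sum1_dec (F P : 'I_n -> R) :
  \sum_(i < n) (d i o * F i + P i) = F o + \sum_(i < n) P i.
Proof. by rewrite big_split /= sdr. Qed.

Lemma Hval (x : pt) : Hn x ->
  \sum_(a < n) Hess (trb h) a a x =
  2%:R * (3%:R - n%:R) * \sum_(k < n) h x k k
  + (6%:R - n%:R) * x1 x * \sum_(k < n) pd o (fun y => h y k k) x
  + x1 x ^+ 2 * \sum_(a < n) \sum_(k < n) pd a (fun y => pd a (fun y => h y k k) y) x.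
Proof.
move=> hx; have x0 : x1 x != 0 by rewrite gt_eqF.
set z := (x1 x)^-1.
pose X m := pd m (trb h) x.
transitivity (\sum_(a < n) (d a o * (2%:R * 2%:R * x1 x * \sum_(k < n) pd a (fun y => h y k k) x
     + 2%:R * \sum_(k < n) h x k k + 2%:R * z * X a)
   + (x1 x ^+ 2 * \sum_(k < n) pd a (fun y => pd a (fun y => h y k k) y) x - z * X o))).
  apply: eq_bigr => a _.
  rewrite /Hess (GamSum hn a a x (fun m => pd m (trb h) x)) -/z -/(X o) -/(X a).
  rewrite (@pd_loc R n hn (pd a (trb h)) (fun y => x1 y ^+ 2 * \sum_(k < n) pd a (fun y => h y k k) y
     + (\sum_(k < n) h y k k) * (2%:R * x1 y ^+ 1 * d a o)) x a); last 2 first.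
  - by move=> y hy; rewrite pdtrb.
  - exact: hx.
  pdtac_4; rewrite /=.
  by dsplit_4; ring.
rewrite sum1_dec /X !pdtrb //.
do 2 (expand_4; sumnorm_4).
rewrite /z; field.
exact: x0.
Qed.


Lemma contr_in (y : pt) i j (F : 'I_n -> 'I_n -> R) :
  \sum_(a < n) \sum_(c < n) binv y i a * binv y j c * F a c = x1 y ^+ 4 * F i j.
Proof.
rewrite (eq_bigr (fun a => d i a * \sum_(c < n) d j c * (x1 y ^+ 4 * F a c))); last first.
  move=> a _; rewrite mulr_sumr; apply: eq_bigr => c _; rewrite !binv_e; ring.
rewrite sdl sdl //.
Qed.

Lemma contr4 (y : pt) (F : 'I_n -> 'I_n -> 'I_n -> 'I_n -> R) :
  \sum_(i < n) \sum_(j < n) \sum_(a < n) \sum_(c < n) binv y i a * binv y j c * F i j a c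
  = x1 y ^+ 4 * \sum_(i < n) \sum_(j < n) F i j i j.
Proof.
rewrite mulr_sumr; apply: eq_bigr => i _; rewrite mulr_sumr; apply: eq_bigr => j _.
exact: (contr_in y i j (F i j)).
Qed.

Lemma contr4b (y : pt) (A B : 'I_n -> 'I_n -> R) :
  \sum_(i < n) \sum_(j < n) \sum_(a < n) \sum_(c < n) binv y i a * binv y j c * A a c * B i j
  = x1 y ^+ 4 * \sum_(i < n) \sum_(j < n) A i j * B i j.
Proof.
rewrite mulr_sumr; apply: eq_bigr => i _; rewrite mulr_sumr; apply: eq_bigr => j _.
rewrite -(contr_in y i j (fun a c => A a c * B i j)).
by apply: eq_bigr => a _; apply: eq_bigr => c _; rewrite mulrA.
Qed.

Lemma contr2 (y : pt) (G : 'I_n -> 'I_n -> R) :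
  \sum_(a < n) \sum_(c < n) binv y a c * G a c = x1 y ^+ 2 * \sum_(a < n) G a a.
Proof.
rewrite mulr_sumr; apply: eq_bigr => a _.
rewrite (eq_bigr (fun c => d a c * (x1 y ^+ 2 * G a c))) ?sdl // => c _.
by rewrite binv_e; ring.
Qed.

Definition Vval (x : pt) : R :=
  x1 x ^+ 4 * \sum_(i < n) \sum_(j < n) pd i (pd j (fun y => h y i j)) x
  - x1 x ^+ 4 * \sum_(a < n) \sum_(k < n) pd a (fun y => pd a (fun y => h y k k) y) x
  + (3%:R - n%:R) * x1 x ^+ 3 * (\sum_(k < n) pd k (fun y => h y k o) x
        + \sum_(k < n) pd k (fun y => h y o k) x)
  + (n%:R - 5%:R) * x1 x ^+ 3 * \sum_(k < n) pd o (fun y => h y k k) x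
  + (2%:R * n%:R - 4%:R) * x1 x ^+ 2 * \sum_(k < n) h x k k
  + (3%:R - n%:R) * (2%:R - n%:R) * x1 x ^+ 2 * h x o o.

Lemma LHSval (x : pt) : Hn x -> Pop h x = Vval x.
Proof.
move=> hx; have x0 : x1 x != 0 by rewrite gt_eqF.
rewrite /Pop (contr4 x (fun i j a c => D2T h a c i j x)) contr2.
rewrite (contr4b x (fun a c => Ric a c x) (fun i j => h x i j)).
rewrite (T1val hn hsm hx) (Hval hx).
have Hric : \sum_(i < n) \sum_(j < n) Ric i j x * h x i j =
    (1 - n%:R) * (x1 x ^+ 2)^-1 * \sum_(k < n) h x k k.
  rewrite mulr_sumr; apply: eq_bigr => i _.
  rewrite (eq_bigr (fun j => d i j * ((1 - n%:R) * (x1 x ^+ 2)^-1 * h x i j))) ?sdl //.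
  by move=> j _; rewrite RicE //; ring.
rewrite Hric /Vval; field.
exact: x0.
Qed.

End Part4.

Section Part5.
Variables (R : realType) (n : nat).
Hypothesis hn : (2 <= n)%N.
Local Notation pt := 'rV[R]_n.
Local Notation o := (o0 hn).
Local Notation d := (@dl R n).
Local Notation e a := (delta_mx 0 a : pt).
Variable h : pt -> 'M[R]_n.
Hypothesis hsm : forall i j : 'I_n, smooth_on (@Hn R n) (fun x => h x i j).

Ltac dsplit_5 := rewrite /dl; repeat (rewrite ?eqxx; match goal with |- context [(?a == ?b)] => case: (a =P b) => [?|?]; try subst end);
  try (by exfalso; match goal with H : ?x <> ?x |- _ => exact: H erefl end); rewrite ?mulr1n ?mulr0n.

Lemma der_h4_5 (y : pt) p q a : Hn y -> derivable (fun y => h y p q) y (e a).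
Proof. exact: der_h. Qed.
Lemma der_g4_5 (y : pt) c p q a : Hn y -> derivable (fun y => pd c (fun y => h y p q) y) y (e a).
Proof. exact: der_g. Qed.

Ltac dtac1_5 := match goal with
  | |- derivable (fun _ => ?c) _ _ => exact: der_cst
  | |- derivable (fun y => @fun_of_matrix _ _ _ (h y) _ _) _ _ => by apply: der_h4_5
  | |- derivable (fun y => @pd _ _ _ (fun y => @fun_of_matrix _ _ _ (h y) _ _) y) _ _ => by apply: der_g4_5
  | |- derivable (@pd _ _ _ (fun y => @fun_of_matrix _ _ _ (h y) _ _)) _ _ => by apply: der_g4_5
  | |- derivable (fun y => (@x1 _ _ y)^-1) _ _ => by apply: (@der_invx R n hn)
  | |- derivable (fun y => (@x1 _ _ y) ^+ _) _ _ => by apply: (@der_xp R n hn)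
  | |- derivable (fun y => ((@x1 _ _ y) ^+ _)^-1) _ _ => by apply: (@der_xn R n hn)
  | |- derivable (fun y => @?A y + @?B y) _ _ => apply: derD
  | |- derivable (fun y => - @?A y) _ _ => apply: derN
  | |- derivable (fun y => @?A y * @?B y) _ _ => apply: derM
  | |- derivable (fun y => \sum_(i < _) @?A y i) _ _ => apply: der_sum => ?
  end.
Ltac dtac_5 := repeat dtac1_5.

Ltac pd1_5 := match goal with
  | |- context [@pd _ _ ?a (fun _ => ?c) ?x] => rewrite (@pd_cst _ _ x a c)
  | |- context [@pd _ _ ?a (fun y => (@x1 _ _ y)^-1) ?x] => rewrite (@pd_inv _ _ hn x a); last by []
  | |- context [@pd _ _ ?a (fun y => (@x1 _ _ y) ^+ ?k) ?x] => rewrite (@pd_xp _ _ hn k x a)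
  | |- context [@pd _ _ ?a (fun y => ((@x1 _ _ y) ^+ ?k.+1)^-1) ?x] => rewrite (@pd_xn _ _ hn k x a); last by []
  | |- context [@pd _ _ ?a (fun y => \sum_(k < ?m) @?A y k) ?x] =>
       rewrite (@pd_sum _ _ x a m (fun k y => A y k)); [| move=> ?; dtac_5]
  | |- context [@pd _ _ ?a (fun y => @?A y + @?B y) ?x] => rewrite (@pdD _ _ x a A B); [| dtac_5 | dtac_5]
  | |- context [@pd _ _ ?a (fun y => - @?A y) ?x] => rewrite (@pdN _ _ x a A); [| dtac_5]
  | |- context [@pd _ _ ?a (fun y => @?A y * @?B y) ?x] => rewrite (@pdM _ _ x a A B); [| dtac_5 | dtac_5]
  end.
Ltac pdtac_5 := repeat (pd1_5; cbv beta).

Lemma sB (c : R) (G F : 'I_n -> R) : \sum_(i < n) (G i * c) * F i = c * \sum_(i < n) (G i * F i).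
Proof. by rewrite mulr_sumr; apply: eq_bigr => i _; ring. Qed.

Ltac expand_5 := rewrite ?(mulrDr, mulrDl, mulrN, mulNr, opprD, opprK).
Ltac sumnorm_5 := rewrite ?(big_split, sumrN) /=; rewrite ?sA ?sB ?sdid -?mulr_sumr ?sdl ?sdr ?did ?sumr_const ?card_ord /=.

Definition Qf (y : pt) : R := x1 y ^+ 4 * (x1 y ^+ n.+1)^-1.
Definition QD (y : pt) : R := 4%:R * x1 y ^+ 3 * (x1 y ^+ n.+1)^-1 - n.+1%:R * x1 y ^+ 4 * (x1 y ^+ n.+2)^-1.

Lemma r2E (y : pt) i j : Hn y ->
  raise2 (psi h) y i j = x1 y ^+ 4 * (x1 y ^+ n.+1)^-1 * (h y i j - d i j * \sum_(k < n) h y k k).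
Proof.
move=> hy; have y0 : x1 y != 0 by rewrite gt_eqF.
rewrite /raise2 mxE (contr_in y i j (fun a c => psi h y a c)) /psi !mxE (trbE h) -[_ *+ (i == j)]mulr_natr /dl.
by field; rewrite expf_neq0 ?y0.
Qed.

Lemma pdr1 (y : pt) i j : Hn y ->
  pd j (fun y => raise2 (psi h) y i j) y =
  d j o * QD y * (h y i j - d i j * \sum_(k < n) h y k k)
  + Qf y * (pd j (fun y => h y i j) y - d i j * \sum_(k < n) pd j (fun y => h y k k) y).
Proof.
move=> hy; have y0 : x1 y != 0 by rewrite gt_eqF.
rewrite (@pd_loc R n hn _ (fun y => x1 y ^+ 4 * (x1 y ^+ n.+1)^-1 * (h y i j - d i j * \sum_(k < n) h y k k)) y j) //; last first.
  by move=> z hz; rewrite r2E.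
pdtac_5; rewrite /Qf /QD /=; ring.
Qed.


Definition QDD (y : pt) : R := 12%:R * x1 y ^+ 2 * (x1 y ^+ n.+1)^-1
  - 8%:R * n.+1%:R * x1 y ^+ 3 * (x1 y ^+ n.+2)^-1 + n.+1%:R * n.+2%:R * x1 y ^+ 4 * (x1 y ^+ n.+3)^-1.

Lemma s2M (c : R) (X : 'I_n -> 'I_n -> R) :
  \sum_(i < n) \sum_(j < n) c * X i j = c * \sum_(i < n) \sum_(j < n) X i j.
Proof. rewrite mulr_sumr; apply: eq_bigr => i _; by rewrite mulr_sumr. Qed.

Lemma rhs1 (x : pt) : Hn x ->
  \sum_(i < n) \sum_(j < n) pd i (pd j (fun y => raise2 (psi h) y i j)) x =
  Qf x * \sum_(i < n) \sum_(j < n) pd i (pd j (fun y => h y i j)) x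
  - Qf x * \sum_(a < n) \sum_(k < n) pd a (fun y => pd a (fun y => h y k k) y) x
  + QD x * (\sum_(k < n) pd k (fun y => h y o k) x + \sum_(k < n) pd k (fun y => h y k o) x
            - 2%:R * \sum_(k < n) pd o (fun y => h y k k) x)
  + QDD x * (h x o o - \sum_(k < n) h x k k).
Proof.
move=> hx; have x0 : x1 x != 0 by rewrite gt_eqF.
transitivity (\sum_(i < n) \sum_(j < n) (
   d i o * (QD x * (pd j (fun y => h y i j) x - d i j * \sum_(k < n) pd j (fun y => h y k k) x)
            + d j o * QDD x * (h x i j - d i j * \sum_(k < n) h x k k))
 + d j o * (QD x * (pd i (fun y => h y i j) x - d i j * \sum_(k < n) pd i (fun y => h y k k) x))
 + d i j * (- (Qf x * \sum_(k < n) pd i (fun y => pd j (fun y => h y k k) y) x))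
 + Qf x * pd i (pd j (fun y => h y i j)) x)).
  apply: eq_bigr => i _; apply: eq_bigr => j _.
  rewrite (@pd_loc R n hn _ (fun y => d j o * (4%:R * x1 y ^+ 3 * (x1 y ^+ n.+1)^-1
        - n.+1%:R * x1 y ^+ 4 * (x1 y ^+ n.+2)^-1) * (h y i j - d i j * \sum_(k < n) h y k k)
     + x1 y ^+ 4 * (x1 y ^+ n.+1)^-1 * (pd j (fun y => h y i j) y - d i j * \sum_(k < n) pd j (fun y => h y k k) y)) x i) //; last first.
    by move=> z hz; rewrite pdr1.
  pdtac_5; rewrite /Qf /QD /QDD /=.
  by dsplit_5; ring.
rewrite (sum2_dec hn) s2M.
do 3 (expand_5; sumnorm_5).
rewrite /Qf /QD /QDD; ring.
Qed.


End Part5.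

Section Part6.
Variables (R : realType) (n : nat).
Hypothesis hn : (2 <= n)%N.
Local Notation pt := 'rV[R]_n.
Local Notation o := (o0 hn).
Local Notation d := (@dl R n).
Local Notation e a := (delta_mx 0 a : pt).
Variable h : pt -> 'M[R]_n.
Hypothesis hsm : forall i j : 'I_n, smooth_on (@Hn R n) (fun x => h x i j).

Ltac dsplit_6 := rewrite /dl; repeat (rewrite ?eqxx; match goal with |- context [(?a == ?b)] => case: (a =P b) => [?|?]; try subst end);
  try (by exfalso; match goal with H : ?x <> ?x |- _ => exact: H erefl end); rewrite ?mulr1n ?mulr0n.

Lemma der_h4_6 (y : pt) p q a : Hn y -> derivable (fun y => h y p q) y (e a).
Proof. exact: der_h. Qed.
Lemma der_g4_6 (y : pt) c p q a : Hn y -> derivable (fun y => pd c (fun y => h y p q) y) y (e a).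
Proof. exact: der_g. Qed.

Ltac dtac1_6 := match goal with
  | |- derivable (fun _ => ?c) _ _ => exact: der_cst
  | |- derivable (fun y => @fun_of_matrix _ _ _ (h y) _ _) _ _ => by apply: der_h4_6
  | |- derivable (fun y => @pd _ _ _ (fun y => @fun_of_matrix _ _ _ (h y) _ _) y) _ _ => by apply: der_g4_6
  | |- derivable (@pd _ _ _ (fun y => @fun_of_matrix _ _ _ (h y) _ _)) _ _ => by apply: der_g4_6
  | |- derivable (fun y => (@x1 _ _ y)^-1) _ _ => by apply: (@der_invx R n hn)
  | |- derivable (fun y => (@x1 _ _ y) ^+ _) _ _ => by apply: (@der_xp R n hn)
  | |- derivable (fun y => ((@x1 _ _ y) ^+ _)^-1) _ _ => by apply: (@der_xn R n hn)
  | |- derivable (fun y => @?A y + @?B y) _ _ => apply: derD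
  | |- derivable (fun y => - @?A y) _ _ => apply: derN
  | |- derivable (fun y => @?A y * @?B y) _ _ => apply: derM
  | |- derivable (fun y => \sum_(i < _) @?A y i) _ _ => apply: der_sum => ?
  end.
Ltac dtac_6 := repeat dtac1_6.

Ltac pd1_6 := match goal with
  | |- context [@pd _ _ ?a (fun _ => ?c) ?x] => rewrite (@pd_cst _ _ x a c)
  | |- context [@pd _ _ ?a (fun y => (@x1 _ _ y)^-1) ?x] => rewrite (@pd_inv _ _ hn x a); last by []
  | |- context [@pd _ _ ?a (fun y => (@x1 _ _ y) ^+ ?k) ?x] => rewrite (@pd_xp _ _ hn k x a)
  | |- context [@pd _ _ ?a (fun y => ((@x1 _ _ y) ^+ ?k.+1)^-1) ?x] => rewrite (@pd_xn _ _ hn k x a); last by []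
  | |- context [@pd _ _ ?a (fun y => \sum_(k < ?m) @?A y k) ?x] =>
       rewrite (@pd_sum _ _ x a m (fun k y => A y k)); [| move=> ?; dtac_6]
  | |- context [@pd _ _ ?a (fun y => @?A y + @?B y) ?x] => rewrite (@pdD _ _ x a A B); [| dtac_6 | dtac_6]
  | |- context [@pd _ _ ?a (fun y => - @?A y) ?x] => rewrite (@pdN _ _ x a A); [| dtac_6]
  | |- context [@pd _ _ ?a (fun y => @?A y * @?B y) ?x] => rewrite (@pdM _ _ x a A B); [| dtac_6 | dtac_6]
  end.
Ltac pdtac_6 := repeat (pd1_6; cbv beta).

Lemma sB6 (c : R) (G F : 'I_n -> R) : \sum_(i < n) (G i * c) * F i = c * \sum_(i < n) (G i * F i).
Proof. by rewrite mulr_sumr; apply: eq_bigr => i _; ring. Qed.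

Ltac expand_6 := rewrite ?(mulrDr, mulrDl, mulrN, mulNr, opprD, opprK).
Ltac sumnorm_6 := rewrite ?(big_split, sumrN) /=; rewrite ?sA ?sB6 ?sdid -?mulr_sumr ?sdl ?sdr ?did ?sumr_const ?card_ord /=.

Local Notation Qf := (@Qf R n).
Lemma sum_at0 (F : 'I_n -> R) : \sum_(i < n | nat_of_ord i == 0%N) F i = F o.
Proof. by apply: big_pred1 => i /=; rewrite -val_eqE. Qed.

Lemma RHSval (x : pt) : Hn x ->
  x1 x ^+ n.+1 *
       (\sum_(i < n) \sum_(j < n)
            pd i (pd j (fun y => raise2 (psi h) y i j)) x
        + \sum_(i < n | nat_of_ord i == 0%N)
            pd i (fun y => (x1 y)^-1 * \sum_(k < n) raise2 (psi h) y k k) x)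
  = Vval hn h x.
Proof.
move=> hx; have x0 : x1 x != 0 by rewrite gt_eqF.
rewrite (rhs1 hn hsm hx) sum_at0.
rewrite (@pd_loc R n hn _ (fun y => (x1 y)^-1 * ((1 - n%:R) * (x1 y ^+ 4 * (x1 y ^+ n.+1)^-1 * \sum_(k < n) h y k k))) x o) //; last first.
  move=> y hy; congr (_ * _).
  rewrite (eq_bigr (fun k => x1 y ^+ 4 * (x1 y ^+ n.+1)^-1 * (h y k k - d k k * \sum_(k < n) h y k k))); last first.
    by move=> k _; rewrite r2E.
  rewrite -mulr_sumr sumrB sdid sumr_const card_ord -[_ *+ n]mulr_natr; ring.
pdtac_6; rewrite /Vval /Qf /QD /QDD /= !exprS !did.
have xn : x1 x ^+ n != 0 by rewrite expf_neq0.
field.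
by rewrite xn x0.
Qed.

End Part6.

Lemma trbE_gen (R : realType) (n : nat) (T : 'rV[R]_n -> 'M[R]_n) y :
  trb T y = x1 y ^+ 2 * \sum_(k < n) T y k k.
Proof.
rewrite /trb mulr_sumr; apply: eq_bigr => i _.
rewrite (eq_bigr (fun j => dl R i j * (x1 y ^+ 2 * T y i j))) ?sdl // => j _.
by rewrite binv_e; ring.
Qed.

Theorem lemma2p2 (R : realType) (n : nat) (hn : (2 <= n)%N)
  (h : 'rV[R]_n -> 'M[R]_n)
  (hsym : forall x, Hn x -> (h x)^T = h x)
  (hsmooth : forall i j : 'I_n, smooth_on (@Hn R n) (fun x => h x i j)) :
  (forall x, Hn x ->
     h x = (x1 x ^+ n.+1) *:
             (psi h x + ((1 - n%:R)^-1 * trb (psi h) x) *: bmet x)) /\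
  (forall x, Hn x ->
     Pop h x = x1 x ^+ n.+1 *
       (\sum_(i < n) \sum_(j < n)
            pd i (pd j (fun y => raise2 (psi h) y i j)) x
        + \sum_(i < n | nat_of_ord i == 0%N)
            pd i (fun y => (x1 y)^-1 * \sum_(k < n) raise2 (psi h) y k k) x)).
Proof.
split; last first.
  move=> x hx; rewrite (LHSval hn hsmooth hx).
  by rewrite (RHSval hn hsmooth hx).
move=> x hx; have x0 : x1 x != 0 by rewrite gt_eqF.
have xn : x1 x ^+ n.+1 != 0 by rewrite expf_neq0.
have n1 : (1 - n%:R : R) != 0.
  rewrite subr_eq0 eq_sym pnatr_eq1; apply/eqP => n1; move: hn; rewrite n1.
  by [].
have tp : trb (psi h) x = x1 x ^+ 2 * ((x1 x ^+ n.+1)^-1 * ((1 - n%:R) * \sum_(k < n) h x k k)).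
  rewrite trbE_gen; congr (_ * _).
  rewrite (eq_bigr (fun k => (x1 x ^+ n.+1)^-1 * (h x k k - \sum_(l < n) h x l l))); last first.
    move=> k _; rewrite /psi !mxE eqxx (@trbE_gen R n h) /=; rewrite mulr1n; field; by rewrite xn x0.
  rewrite -mulr_sumr sumrB sumr_const card_ord -[_ *+ n]mulr_natr; field.
  exact: xn.
apply/matrixP => i j; rewrite tp /psi !mxE (@trbE_gen R n h).
rewrite -[_ *+ (i == j)]mulr_natr.
field.
by rewrite n1 xn x0.
Qed.
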